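(* Let $p$ be a prime and $K$ a finite extension of $\mathbb{Q}_p$. Suppose that $B$ is a nonempty finite set of elements of $K$ such that $|\beta|_p<1$ for each $\beta\in B$. For each $\beta\in B$ let $c_\beta:\mathbb{Z}_p\to K$ be a continuous function, and for $n\in\mathbb N$ define $s(n)=\sum_{\beta\in B}c_\beta(n)\beta^n$. If there is a twisted interpolation of $s(n)_{n\ge0}$ to $\mathbb{Z}_p$, then $s(n)=0$ for all $n\ge 0$.
   Context: $\mathbb N=\{0,1,2,\dots\}$; $|\cdot|_p$ is the unique absolute value on $K$ extending the $p$-adic one. Let $q\ge1$ be a power of $p$. A twisted interpolation of $s(n)_{n\ge0}$ to $\mathbb{Z}_p$ is a family $\{(s_j,A_j):j\in J\}$ where $\mathbb N=\bigcup_{j\in J}A_j$ is a finite partition with each $A_j$ dense in $r+q\mathbb{Z}_p$ for some $0\le r\le q-1$, $L$ is a finite extension of $\mathbb{Q}_p$, each $s_j:\mathbb{Z}_p\to L$ is continuous, and $s(n)=s_j(n)$ for all $n\in A_j$ and $j\in J$. *)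

(* Defs.v *)
From HB Require Import structures.
From mathcomp Require Import all_boot all_order all_algebra.
From mathcomp Require Import reals.
Set Implicit Arguments. Unset Strict Implicit. Unset Printing Implicit Defensive.
Import Order.TTheory GRing.Theory Num.Theory.
Local Open Scope ring_scope.

(* x k is the residue of x modulo p^k; compatibility: x (k+1) mod p^k = x k. *)
Definition Zpadic (p : nat) :=
  { x : nat -> nat | forall k, (x k.+1 %% p ^ k = x k)%N /\ (x k %% p ^ k = x k)%N }.

Definition zp_res (p : nat) (x : Zpadic p) (k : nat) : nat := proj1_sig x k.

Lemma zp_of_nat_proof (p n : nat) :
  forall k, ((n %% p ^ k.+1) %% p ^ k = n %% p ^ k)%N /\ ((n %% p ^ k) %% p ^ k = n %% p ^ k)%N.
Proof.
move=> k; split; last by rewrite modn_mod.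
by rewrite modn_dvdm // expnS dvdn_mull.
Qed.

Definition zp_of_nat (p n : nat) : Zpadic p :=
  exist _ (fun k => n %% p ^ k)%N (zp_of_nat_proof p n).

Definition zp_coset (p e r : nat) (x : Zpadic p) : Prop := zp_res x e = r.

(* A subset A of N (viewed in Z_p) is dense in r + p^e Z_p:
   A is contained in r + p^e Z_p, and every point of r + p^e Z_p is a limit of points of A,
   i.e. every p-adic ball  {y | y = x mod p^k}  around such a point meets A. *)
Definition dense_in_coset (p : nat) (A : pred nat) (e r : nat) : Prop :=
  (forall n, A n -> zp_coset e r (zp_of_nat p n)) /\
  (forall x : Zpadic p, zp_coset e r x ->
     forall k, exists n, A n /\ zp_res (zp_of_nat p n) k = zp_res x k).

Section Valued.
Variables (R : realType) (K : fieldType) (v : K -> R).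

(* v is a non-archimedean absolute value extending the p-adic one on Q (|p| = 1/p) *)
Definition padic_abs (p : nat) : Prop :=
  [/\ forall x, 0 <= v x,
      forall x, v x = 0 <-> x = 0,
      forall x y, v (x * y) = v x * v y,
      forall x y, v (x + y) <= Num.max (v x) (v y)
    & v (p%:R) = (p%:R)^-1].

Definition v_cauchy (u : nat -> K) : Prop :=
  forall eps : R, 0 < eps -> exists N, forall m n, (N <= m)%N -> (N <= n)%N -> v (u m - u n) < eps.

Definition v_converges (u : nat -> K) (l : K) : Prop :=
  forall eps : R, 0 < eps -> exists N, forall n, (N <= n)%N -> v (u n - l) < eps.

Definition v_complete : Prop :=
  forall u, v_cauchy u -> exists l, v_converges u l.

(* the closure of Q in K; when K is complete this is a copy of Q_p *)
Definition in_Qp (x : K) : Prop :=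
  forall eps : R, 0 < eps -> exists a : rat, v (ratr a - x) < eps.

(* K (with v) is a finite extension of Q_p: v extends |.|_p, K is complete, and K is
   spanned by finitely many elements over the closure of Q in K (= Q_p). *)
Definition finite_ext_Qp (p : nat) : Prop :=
  [/\ padic_abs p, v_complete &
      exists e : seq K, forall x : K, exists a : seq K,
        [/\ size a = size e, forall i, in_Qp a`_i &
            x = \sum_(i < size e) a`_i * e`_i]].

Definition zp_continuous (p : nat) (f : Zpadic p -> K) : Prop :=
  forall (x : Zpadic p) (eps : R), 0 < eps ->
    exists k, forall y : Zpadic p, zp_res y k = zp_res x k -> v (f y - f x) < eps.

End Valued.

(* A twisted interpolation of s : N -> K to Z_p.  q = p^e; the finite partition is indexed
   by a finType J; the target field L is a finite extension of Q_p into which K embeds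
   compatibly with the absolute values (so that s(n) = s_j(n) makes sense). *)
Definition twisted_interpolation (p : nat) (R : realType) (K : fieldType) (vK : K -> R)
    (s : nat -> K) : Prop :=
  exists (e : nat) (J : finType) (A : J -> pred nat) (r : J -> nat)
         (L : fieldType) (vL : L -> R) (iota : {rmorphism K -> L}) (sj : J -> Zpadic p -> L),
    [/\ finite_ext_Qp vL p /\ (forall x, vL (iota x) = vK x),
        forall n, exists! j, A j n,
        forall j, (r j < p ^ e)%N /\ dense_in_coset p (A j) e (r j),
        forall j, zp_continuous vL (sj j)
      & forall j n, A j n -> sj j (zp_of_nat p n) = iota (s n)].

(* Main.v *)
Require Import Defs.
From HB Require Import structures.
From mathcomp Require Import all_boot all_order all_algebra.
From mathcomp Require Import reals.
From mathcomp Require Import zify ring lra.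
Import Order.TTheory GRing.Theory Num.Theory.
Local Open Scope ring_scope.

Lemma bernoulli_ge (R : realFieldType) (t : R) (n : nat) : 0 <= t -> 1 + t *+ n <= (1 + t) ^+ n.
Proof.
move=> t0; elim: n => [|n IH]; first by rewrite expr0 mulr0n addr0.
rewrite exprS mulrS.
have h1 : 0 <= 1 + t by rewrite addr_ge0.
have := ler_wpM2l h1 IH.
have : 0 <= t * t *+ n by rewrite mulrn_wge0 // mulr_ge0.
move=> h2 h3; apply: le_trans h3.
rewrite mulrDr mulr1 mulrDl mul1r mulrnAr.
lra.
Qed.

Lemma pow_small (R : realType) (a eps : R) : 0 <= a -> a < 1 -> 0 < eps ->
  exists N : nat, a ^+ N < eps.
Proof.
move=> a0 a1 e0.
have [->|an0] := eqVneq a 0; first by exists 1%N; rewrite expr1.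
have ap : 0 < a by rewrite lt_neqAle eq_sym an0.
pose t := a^-1 - 1.
have t0 : 0 < t by rewrite /t subr_gt0 invf_gt1.
have hx : 0 <= eps^-1 / t by rewrite divr_ge0 // ltW // invr_gt0.
exists (Num.Def.archi_bound (eps^-1 / t)).
set N := Num.Def.archi_bound _.
have hN := archi_boundP hx.
have hB := @bernoulli_ge R t N (ltW t0).
have e1 : 1 + t = a^-1 by rewrite /t addrC subrK.
rewrite e1 in hB.
have hlt : eps^-1 < a^-1 ^+ N.
  apply: lt_le_trans hB.
  have : eps^-1 < N%:R * t by rewrite -ltr_pdivrMr.
  rewrite -mulr_natl; lra.
rewrite exprVn in hlt.
by rewrite -(ltf_pV2 (F:=R)) ?posrE ?exprn_gt0.
Qed.

Section V.
Variables (R : realType) (K : fieldType) (v : K -> R) (p : nat).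
Hypothesis H : padic_abs v p.

Lemma v_ge0 x : 0 <= v x. Proof. by case: H. Qed.
Lemma vM x y : v (x * y) = v x * v y. Proof. by case: H. Qed.
Lemma vU x y : v (x + y) <= Num.max (v x) (v y). Proof. by case: H. Qed.
Lemma v0iff x : v x = 0 <-> x = 0. Proof. by case: H. Qed.

Lemma v1 : v 1 = 1.
Proof.
have h : v 1 * v 1 = v 1 * 1 by rewrite -vM !mulr1.
have n0 : v 1 != 0 by apply/eqP => /v0iff /eqP; rewrite oner_eq0.
exact: (mulfI n0 h).
Qed.

Lemma vN x : v (- x) = v x.
Proof.
have h : v (-1) * v (-1) = 1 by rewrite -vM mulrNN mulr1 v1.
have g := v_ge0 (-1).
have e : v (-1) = 1 by nra.
by rewrite -mulN1r vM e mul1r.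
Qed.

Lemma vX x n : v (x ^+ n) = v x ^+ n.
Proof. by elim: n => [|n IH]; rewrite ?expr0 ?v1 // !exprS vM IH. Qed.

Lemma vsub x y : v x <= Num.max (v (x - y)) (v y).
Proof. by have := vU (x - y) y; rewrite subrK. Qed.

Lemma vsum (T : eqType) (s : seq T) (F : T -> K) (eps : R) : 0 < eps ->
  (forall b, b \in s -> v (F b) < eps) -> v (\sum_(b <- s) F b) < eps.
Proof.
move=> e0; elim: s => [|a s IH] h.
  by rewrite big_nil; have -> : v 0 = 0 by apply/v0iff.
rewrite big_cons; apply: le_lt_trans (vU _ _) _.
rewrite gt_max; apply/andP; split; first by apply: h; rewrite mem_head.
by apply: IH => b bs; apply: h; rewrite in_cons bs orbT.
Qed.
End V.
Arguments v_ge0 {R K v p}.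
Arguments vM {R K v p}.
Arguments vU {R K v p}.
Arguments v0iff {R K v p}.
Arguments v1 {R K v p}.
Arguments vN {R K v p}.
Arguments vX {R K v p}.
Arguments vsub {R K v p}.
Arguments vsum {R K v p}.

Lemma list_bound (T : eqType) (s : seq T) (P : T -> nat -> Prop) :
  (forall b N M, P b N -> (N <= M)%N -> P b M) ->
  (forall b, b \in s -> exists N, P b N) -> exists N, forall b, b \in s -> P b N.
Proof.
move=> mono; elim: s => [|a s IH] h; first by exists 0%N.
have [Na HNa] := h a (mem_head _ _).
have [Ns HNs] : exists N, forall b, b \in s -> P b N.
  by apply: IH => b bs; apply: h; rewrite in_cons bs orbT.
exists (maxn Na Ns) => b; rewrite in_cons => /orP [/eqP ->|bs].
  by apply: mono HNa _; rewrite leq_maxl.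
by apply: mono (HNs b bs) _; rewrite leq_maxr.
Qed.

Lemma mod_mono (p N M m n : nat) : (N <= M)%N -> (m %% p ^ M = n %% p ^ M)%N ->
  (m %% p ^ N = n %% p ^ N)%N.
Proof.
move=> NM h; have d : (p ^ N %| p ^ M)%N by rewrite dvdn_exp2l.
by rewrite -(modn_dvdm m d) h modn_dvdm.
Qed.

Arguments mod_mono {p N M m n}.

Theorem theorem3p7 (p : nat) (R : realType) (K : fieldType) (vK : K -> R)
    (B : seq K) (c : K -> Zpadic p -> K) :
  prime p ->
  finite_ext_Qp vK p ->
  B != [::] -> uniq B ->
  (forall b, b \in B -> vK b < 1) ->
  (forall b, b \in B -> zp_continuous vK (c b)) ->
  twisted_interpolation p vK (fun n => \sum_(b <- B) c b (zp_of_nat p n) * b ^+ n) ->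
  forall n : nat, \sum_(b <- B) c b (zp_of_nat p n) * b ^+ n = 0.
Proof.
move=> pp [HK _ _] _ _ Hb Hc [e [J [A [r [L [vL [iota [sj [[[HL _ _] Hiota] Hpart Hdense Hsj Heq]]]]]]]]] n0.
set S := fun n => \sum_(b <- B) c b (zp_of_nat p n) * b ^+ n.
change (S n0 = 0).
have p1 : (1 < p)%N by apply: prime_gt1.
pose x0 := zp_of_nat p n0.
suff small : forall eps : R, 0 < eps -> vK (S n0) < eps.
  apply/(v0iff HK); have := v_ge0 HK (S n0); rewrite le_eqVlt => /orP [/eqP <- //|h].
  by have := small _ h; rewrite ltxx.
move=> eps eps0.
have [j [Aj _]] := Hpart n0.
have [_ [Hin Hd]] := Hdense j.
have Hr : (n0 %% p ^ e)%N = r j by have := Hin n0 Aj.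
have [k1 Hk1] := Hsj j x0 eps eps0.
pose Mb b := Num.max 1 (vK (c b x0)) + 1.
have Mb0 b : 0 < Mb b by rewrite /Mb ltr_wpDl // le_max ler01.
pose P b N := (forall m, (m %% p ^ N = n0 %% p ^ N)%N -> vK (c b (zp_of_nat p m)) < Mb b) /\
              (forall m, (N <= m)%N -> vK b ^+ m * Mb b < eps).
have [N HN] : exists N, forall b, b \in B -> P b N.
  apply: list_bound.
    move=> b N M [h1 h2] NM; split.
      by move=> m hm; apply: h1; apply: mod_mono NM hm.
    by move=> m hm; apply: h2; apply: leq_trans hm.
  move=> b bB.
  have [kb Hkb] := Hc b bB x0 1 ltr01.
  have [Nb HNb] := @pow_small _ _ _ (v_ge0 HK b) (Hb b bB) (divr_gt0 eps0 (Mb0 b)).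
  exists (maxn kb Nb); split.
    move=> m hm.
    have hm' := mod_mono (leq_maxl kb Nb) hm.
    have := Hkb (zp_of_nat p m) hm'.
    move=> h; apply: le_lt_trans (vsub HK _ (c b x0)) _.
    have hm2 : Num.max (vK (c b (zp_of_nat p m) - c b x0)) (vK (c b x0)) <= Num.max 1 (vK (c b x0)).
      by rewrite ge_max !le_max lexx orbT (ltW h).
    by apply: le_lt_trans hm2 _; rewrite /Mb ltrDl ltr01.
  move=> m hm.
  have hNm : (Nb <= m)%N by apply: leq_trans hm; rewrite leq_maxr.
  have : vK b ^+ m <= vK b ^+ Nb.
    by apply: ler_wiXn2l; [exact: v_ge0 HK b | exact: ltW (Hb b bB) | exact: hNm].
  move=> hle; apply: le_lt_trans (ler_wpM2r (ltW (Mb0 b)) hle) _.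
  by rewrite -ltr_pdivlMr.
pose k := (N + k1 + e + n0).+1.
have kN : (N <= k)%N by rewrite /k; lia.
have kk1 : (k1 <= k)%N by rewrite /k; lia.
have ke : (e <= k)%N by rewrite /k; lia.
have kltp : (k < p ^ k)%N by apply: ltn_expl.
have n0k : (n0 < p ^ k)%N by apply: leq_ltn_trans kltp; rewrite /k; lia.
have pk0 : (0 < p ^ k)%N by rewrite expn_gt0 (ltnW p1).
have pk1 : (2 * p ^ k <= p ^ k.+1)%N by rewrite expnS leq_mul2r p1 orbT.
pose x := zp_of_nat p (n0 + p ^ k).
have Hx : zp_coset e (r j) x.
  rewrite /zp_coset /zp_res /= -Hr.
  have d : (p ^ e %| p ^ k)%N by rewrite dvdn_exp2l.
  by rewrite -modnDmr (eqP d) addn0.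
have [m [Am Hm]] := Hd x Hx k.+1.
rewrite /zp_res /= in Hm.
have Hmk : (m %% p ^ k = n0)%N.
  have := mod_mono (leqnSn k) Hm.
  by move=> ->; rewrite modnDr modn_small.
have mge : (p ^ k <= m)%N.
  rewrite leqNgt; apply/negP => mlt.
  move: Hmk; rewrite modn_small // => mn0.
  move: Hm; rewrite mn0 !modn_small //; [lia|lia|lia].
have Hmn : forall N', (N' <= k)%N -> (m %% p ^ N' = n0 %% p ^ N')%N.
  by move=> N' hN'; apply: mod_mono hN' _; rewrite Hmk modn_small.
have smallm : vK (S m) < eps.
  rewrite /S; apply: (vsum HK _ B (fun b => c b (zp_of_nat p m) * b ^+ m) eps eps0) => b bB.
  have [h1 h2] := HN b bB.
  rewrite (vM HK) (vX HK).
  have c1 := h1 m (Hmn N kN).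
  have hb0 : 0 <= vK b ^+ m by rewrite exprn_ge0 // (v_ge0 HK).
  apply: le_lt_trans (ler_wpM2r hb0 (ltW c1)) _.
  rewrite mulrC; apply: h2.
  by apply: leq_trans mge; apply: leq_trans kN (ltnW kltp).
have E0 : sj j x0 = iota (S n0) by apply: Heq.
have Em : sj j (zp_of_nat p m) = iota (S m) by apply: Heq.
have Hc1 := Hk1 (zp_of_nat p m) (Hmn k1 kk1).
rewrite -Hiota -E0.
apply: le_lt_trans (vsub HL _ (sj j (zp_of_nat p m))) _.
rewrite gt_max -opprB (vN HL) Hc1 /= Em Hiota.
exact: smallm.
Qed.
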